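(* Let $\varphi:\mathbb{R}^n\to\mathbb{R}$ be concave and increasing. For any $\vec q_0\in\mathbb{R}^n$, the function $C:\mathbb{R}^n\to\mathbb{R}$, \[C(\vec q)=\inf\{c\in\mathbb{R}\mid \varphi(c\mathbf 1-\vec q)\ge\varphi(\vec q_0)\},\] is convex, increasing and $\mathbf 1$-invariant. Furthermore, for every history $h\in\mathsf{ValHist}_\varphi((\vec q_0))$ we have $\mathsf{ValTrades}'_C(h)=\mathsf{ValTrades}_\varphi(h)$.
   Context: $\mathbf 1=(1,\dots,1)\in\mathbb{R}^n$. A function $f$ is $\mathbf 1$-invariant if $f(\vec q+\alpha\mathbf 1)=f(\vec q)+\alpha$ for all $\vec q,\alpha$; increasing if $f(\vec q)>f(\vec q')$ whenever $\vec q\succeq\vec q'$ coordinatewise and $\vec q\neq\vec q'$. A history $h$ is a finite list of vectors in $\mathbb{R}^n$, $\vec q_h$ is their sum, and $h\oplus\vec r$ is $h$ with $\vec r$ appended. The CFMM for $\varphi$ is $\mathsf{ValTrades}_\varphi(h)=\{\vec r\mid\varphi(\vec q_h+\vec r)=\varphi(\vec q_h)\}$, and $\mathsf{ValHist}_\varphi((\vec q_0))$ is the smallest set of histories containing the one-element history $(\vec q_0)$ and closed under $h\mapsto h\oplus\vec r$ for $\vec r\in\mathsf{ValTrades}_\varphi(h)$. The cashless cost-function market maker for $C$ is $\mathsf{ValTrades}'_C(h)=\{\vec r+\alpha\mathbf 1\mid\vec r\in\mathbb{R}^n,\ \alpha=C(-\vec q_h-\vec r)-C(-\vec q_h)\}$.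 *)

(* Defs.v *)
From HB Require Import structures.
From mathcomp Require Import all_boot all_order all_algebra.
From mathcomp Require Import all_classical all_reals.
Set Implicit Arguments. Unset Strict Implicit. Unset Printing Implicit Defensive.
Import Order.TTheory GRing.Theory Num.Theory.
Local Open Scope ring_scope.
Local Open Scope classical_set_scope.

Section Defs.
Variables (R : realType) (n : nat).
Notation vec := 'rV[R]_n.

Definition ones : vec := const_mx 1.

Definition vge (q q' : vec) : Prop := forall i, q' ord0 i <= q ord0 i.

Definition one_invariant (f : vec -> R) : Prop :=
  forall (q : vec) (a : R), f (q + a *: ones) = f q + a.

Definition increasing (f : vec -> R) : Prop :=
  forall q q' : vec, vge q q' -> q <> q' -> f q' < f q.

Definition concave (f : vec -> R) : Prop :=
  forall (x y : vec) (t : R), 0 <= t <= 1 ->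
    t * f x + (1 - t) * f y <= f (t *: x + (1 - t) *: y).

Definition convex (f : vec -> R) : Prop :=
  forall (x y : vec) (t : R), 0 <= t <= 1 ->
    f (t *: x + (1 - t) *: y) <= t * f x + (1 - t) * f y.

(* histories: finite lists of vectors; q_h is their sum *)
Definition qh (h : seq vec) : vec := \sum_(v <- h) v.

Definition ValTrades (phi : vec -> R) (h : seq vec) : set vec :=
  [set r | phi (qh h + r) = phi (qh h)].

Inductive ValHist (phi : vec -> R) (q0 : vec) : seq vec -> Prop :=
| ValHist_init : ValHist phi q0 [:: q0]
| ValHist_step (h : seq vec) (r : vec) :
    ValHist phi q0 h -> ValTrades phi h r -> ValHist phi q0 (rcons h r).

Definition ValTrades' (C : vec -> R) (h : seq vec) : set vec :=
  [set v | exists r : vec,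
      v = r + (C (- qh h - r) - C (- qh h)) *: ones].

Definition cost_of (phi : vec -> R) (q0 : vec) (q : vec) : R :=
  inf [set c : R | phi q0 <= phi (c *: ones - q)].

End Defs.

(* Main.v *)
Require Import Defs.
From HB Require Import structures.
From mathcomp Require Import all_boot all_order all_algebra.
From mathcomp Require Import all_classical all_reals.
From mathcomp Require Import ring lra.
Import Order.TTheory GRing.Theory Num.Theory.
Local Open Scope ring_scope.
Local Open Scope classical_set_scope.

Lemma L_mono (R : realType) (n : nat) (phi : 'rV[R]_n -> R) (a b : 'rV[R]_n) :
  increasing phi -> vge a b -> phi b <= phi a.
Proof.
move=> Hi Hab; have [->//|ne] := eqVneq a b.
by apply/ltW/Hi => //; apply/eqP.
Qed.

Lemma L_gstrict (R : realType) (n : nat) (n_gt0 : (0 < n)%N)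
  (phi : 'rV[R]_n -> R) (q : 'rV[R]_n) (c c' : R) :
  increasing phi -> c < c' -> phi (c *: ones R n - q) < phi (c' *: ones R n - q).
Proof.
move=> Hi lt; apply: Hi.
  by move=> i; rewrite !mxE /= lerD2r !mulr1 ltW.
move/rowP/(_ (Ordinal n_gt0)); rewrite !mxE !mulr1 => /addIr E.
by move: lt; rewrite E ltxx.
Qed.

Lemma L_gle (R : realType) (n : nat) (n_gt0 : (0 < n)%N)
  (phi : 'rV[R]_n -> R) (q : 'rV[R]_n) (c c' : R) :
  increasing phi -> c <= c' -> phi (c *: ones R n - q) <= phi (c' *: ones R n - q).
Proof.
move=> Hi; rewrite le_eqVlt => /orP[/eqP->//|lt].
exact/ltW/L_gstrict.
Qed.

Lemma L_chord (R : realType) (n : nat)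
  (phi : 'rV[R]_n -> R) (q : 'rV[R]_n) (a b c : R) :
  concave phi -> a < c -> a <= b -> b <= c ->
  (c - b) * phi (a *: ones R n - q) + (b - a) * phi (c *: ones R n - q)
    <= (c - a) * phi (b *: ones R n - q).
Proof.
move=> Hc ac ab bc.
have ca0 : c - a != 0 by rewrite subr_eq0 gt_eqF.
have ca_gt0 : 0 < c - a by rewrite subr_gt0.
set t := (c - b) / (c - a).
have t01 : 0 <= t <= 1.
  rewrite /t; apply/andP; split; first by apply: divr_ge0; lra.
  by rewrite ler_pdivrMr // mul1r; lra.
have := Hc (a *: ones R n - q) (c *: ones R n - q) t t01.
have -> : t *: (a *: ones R n - q) + (1 - t) *: (c *: ones R n - q)
          = b *: ones R n - q.
  apply/rowP => i; rewrite /ones !mxE /t. field; exact: ca0.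
move=> H.
have E1 : c - b = (c - a) * t by rewrite /t mulrC divfK.
have E2 : b - a = (c - a) * (1 - t) by rewrite /t; field.
rewrite E1 E2; clearbody t.
by rewrite -!mulrA -mulrDr ler_pM2l.
Qed.

Lemma L_cost_eq (R : realType) (n : nat) (n_gt0 : (0 < n)%N)
  (phi : 'rV[R]_n -> R) (q0 q : 'rV[R]_n) :
  concave phi -> increasing phi ->
  phi (cost_of phi q0 q *: ones R n - q) = phi q0.
Proof.
move=> Hc Hi.
set g := fun c : R => phi (c *: ones R n - q).
set T := phi q0.
set S := [set c : R | T <= g c].
have -> : cost_of phi q0 q = inf S by [].
have ch : forall a b c, a < c -> a <= b -> b <= c ->
    (c - b) * g a + (b - a) * g c <= (c - a) * g b.
  by move=> a b c; exact: L_chord.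
have gs : forall c c', c < c' -> g c < g c'.
  by move=> c c'; exact: L_gstrict.
have Sne : S !=set0.
  exists (\sum_i `|q ord0 i + q0 ord0 i|); rewrite /S /g /=.
  apply: L_mono => // i; rewrite /ones !mxE mulr1 lerBrDr addrC.
  apply: le_trans (ler_norm _) _.
  rewrite (bigD1 i) //= lerDl; exact: sumr_ge0.
have Slb : has_lbound S.
  have d0 : 0 < g 0 - g (-1) by rewrite subr_gt0; apply: gs; lra.
  exists (Num.min (-1) ((T - g 0) / (g 0 - g (-1)))) => c Sc.
  have [c1|c1] := lerP (-1) c.
    by rewrite ge_min c1.
  rewrite ge_min; apply/orP; right.
  rewrite ler_pdivrMr //.
  have := ch c (-1) 0 ltac:(lra) (ltW c1) ltac:(lra).
  move: Sc; rewrite /S /= => Sc.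
  nra.
have Cle : forall y, S y -> inf S <= y by move=> y Sy; apply: ge_inf.
set C := inf S.
have D0 : 0 < g C - g (C - 1) by rewrite subr_gt0; apply: gs; lra.
apply/eqP; rewrite eq_le; apply/andP; split.
  rewrite leNgt; apply/negP => TC.
  set d := Num.min 1 ((g C - T) / (g C - g (C - 1))).
  have d0 : 0 < d by rewrite lt_min ltr01 /= divr_gt0 // subr_gt0.
  have d1 : d <= 1 by rewrite ge_min lexx.
  have dD : d * (g C - g (C - 1)) <= g C - T.
    by rewrite -ler_pdivlMr // ge_min lexx orbT.
  have := ch (C - 1) (C - d) C ltac:(lra) ltac:(lra) ltac:(lra).
  move=> H.
  have : S (C - d) by rewrite /S /=; nra.
  move/Cle; lra.
rewrite leNgt; apply/negP => TC.
set e := (T - g C) / (g C - g (C - 1)).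
have e0 : 0 < e by rewrite divr_gt0 // subr_gt0.
have [y Sy yl] := inf_lt Sne (ltr_pwDr e0 (lexx C)).
have Cy := Cle y Sy.
have := ch (C - 1) C y ltac:(lra) ltac:(lra) Cy.
have : (y - C) * (g C - g (C - 1)) < T - g C.
  by rewrite -ltr_pdivlMr // ltrBlDl.
move: Sy; rewrite /S /= => Sy.
nra.
Qed.

Lemma L_uniq (R : realType) (n : nat) (n_gt0 : (0 < n)%N)
  (phi : 'rV[R]_n -> R) (q0 q : 'rV[R]_n) (c : R) :
  concave phi -> increasing phi ->
  phi (c *: ones R n - q) = phi q0 -> cost_of phi q0 q = c.
Proof.
move=> Hc Hi E.
have E' := @L_cost_eq _ _ n_gt0 phi q0 q Hc Hi.
have [lt|gt|//] := ltgtP (cost_of phi q0 q) c.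
  by have := @L_gstrict _ _ n_gt0 phi q _ _ Hi lt; rewrite E E' ltxx.
by have := @L_gstrict _ _ n_gt0 phi q _ _ Hi gt; rewrite E E' ltxx.
Qed.

Lemma L_hist (R : realType) (n : nat) (phi : 'rV[R]_n -> R) (q0 : 'rV[R]_n) h :
  ValHist phi q0 h -> phi (qh h) = phi q0.
Proof.
elim=> [|h' r _ IH Hr].
  by rewrite /qh big_cons big_nil addr0.
have -> : qh (rcons h' r) = qh h' + r.
  by rewrite /qh -cats1 big_cat /= big_cons big_nil addr0.
by rewrite Hr IH.
Qed.

Theorem theorem3p4 (R : realType) (n : nat) (n_gt0 : (0 < n)%N)
  (phi : 'rV[R]_n -> R) (q0 : 'rV[R]_n) :
  concave phi -> increasing phi ->
  let C := cost_of phi q0 in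
  [/\ convex C, increasing C, one_invariant C &
      forall h : seq 'rV[R]_n, ValHist phi q0 h ->
        ValTrades' C h = ValTrades phi h].
Proof.
move=> Hc Hi C.
have CE : forall q, phi (C q *: ones R n - q) = phi q0.
  by move=> q; exact: L_cost_eq.
have CU : forall q c, phi (c *: ones R n - q) = phi q0 -> C q = c.
  by move=> q c; exact: L_uniq.
split.
- move=> x y t t01.
  set z := t *: x + (1 - t) *: y.
  rewrite leNgt; apply/negP => lt.
  have := @L_gstrict _ _ n_gt0 phi z _ _ Hi lt; rewrite CE.
  have -> : (t * C x + (1 - t) * C y) *: ones R n - z =
     t *: (C x *: ones R n - x) + (1 - t) *: (C y *: ones R n - y).
    by apply/rowP => i; rewrite /z /ones !mxE; ring.
  have := Hc (C x *: ones R n - x) (C y *: ones R n - y) t t01.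
  rewrite !CE => H1 H2; lra.
- move=> q q' vqq' nqq'.
  set c := C q.
  have lt1 : phi (c *: ones R n - q) < phi (c *: ones R n - q').
    apply: Hi.
      by move=> i; rewrite !mxE lerD2l lerN2; exact: vqq'.
    by move/addrI/oppr_inj => E; apply: nqq'.
  rewrite ltNge; apply/negP => le.
  have := @L_gle _ _ n_gt0 phi q' _ _ Hi le; rewrite CE.
  move: lt1; rewrite /c CE => lt1 le2.
  by have := lt_le_trans lt1 le2; rewrite ltxx.
- move=> q a; apply: CU.
  have -> : (C q + a) *: ones R n - (q + a *: ones R n) = C q *: ones R n - q.
    by apply/rowP => i; rewrite /ones !mxE; ring.
  exact: CE.
- move=> h Hh.
  have HQ := @L_hist _ _ _ _ _ Hh.
  set Q := qh h.
  have C0 : C (- Q) = 0.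
    apply: CU; rewrite scale0r sub0r opprK; exact: HQ.
  apply/seteqP; split => v /=.
    case=> r ->; rewrite /ValTrades /= -/Q C0 subr0.
    have -> : Q + (r + C (- Q - r) *: ones R n) = C (- Q - r) *: ones R n - (- Q - r).
      by apply/rowP => i; rewrite /ones !mxE; ring.
    by rewrite CE HQ.
  rewrite /ValTrades /= -/Q => Hv.
  exists v.
  have -> : C (- Q - v) = 0.
    apply: CU; rewrite scale0r sub0r opprB.
    have -> : v - - Q = Q + v by rewrite opprK addrC.
    by rewrite Hv HQ.
  by rewrite C0 subr0 scale0r addr0.
Qed.
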